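(* Let $\mathbf A$ be a modular pseudo-Kleene lattice and $x,y\in A$. The following are equivalent: (1) $x\,\mathrm C\,y$; (2) $y\,\mathrm C\,x$; (3) $x\,\mathrm C\,y'$; (4) $x'\,\mathrm C\,y$; (5) $x\,\mathrm C\,y$ and $(x\lor x')\land(y\lor y')=((x\lor x')\land y)\lor((x\lor x')\land y')$.
   Context: A pseudo-Kleene lattice is an algebra $(A,\land,\lor,{}',0,1)$ that is a bounded lattice with an antitone involution ${}'$ ($x\leq y\Rightarrow y'\leq x'$, $x''=x$) satisfying $x\land x'\leq y\lor y'$; it is modular if its lattice reduct is modular. For $a,b\in A$, $a\,\mathrm C\,b$ means: (C1) $a\land(b\lor b')=(a\land b)\lor(a\land b')$; (C2) $b\land(a\lor a')=(b\land a)\lor(b\land a')$; (C3) $a\land a'=((a\land a')\land b)\lor((a\land a')\land b')$. *)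

(* Defs.v *)
Record bounded_lattice := BoundedLattice {
  carrier :> Type;
  meet : carrier -> carrier -> carrier;
  join : carrier -> carrier -> carrier;
  bot : carrier;
  top : carrier;
  meetC : forall x y, meet x y = meet y x;
  joinC : forall x y, join x y = join y x;
  meetA : forall x y z, meet x (meet y z) = meet (meet x y) z;
  joinA : forall x y z, join x (join y z) = join (join x y) z;
  meet_absorb : forall x y, meet x (join x y) = x;
  join_absorb : forall x y, join x (meet x y) = x;
  meet_bot : forall x, meet bot x = bot;
  join_top : forall x, join top x = top
}.

Arguments meet {_}.
Arguments join {_}.
Arguments bot {_}.
Arguments top {_}.

Definition lat_le {L : bounded_lattice} (x y : L) : Prop := meet x y = x.

Definition modular (L : bounded_lattice) : Prop :=
  forall x y z : L, lat_le x z -> join x (meet y z) = meet (join x y) z.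

Record pseudo_kleene (L : bounded_lattice) (c : L -> L) : Prop := {
  pk_antitone : forall x y : L, lat_le x y -> lat_le (c y) (c x);
  pk_invol : forall x : L, c (c x) = x;
  pk_kleene : forall x y : L, lat_le (meet x (c x)) (join y (c y))
}.

Definition commutes {L : bounded_lattice} (c : L -> L) (a b : L) : Prop :=
  meet a (join b (c b)) = join (meet a b) (meet a (c b)) /\
  meet b (join a (c a)) = join (meet b a) (meet b (c a)) /\
  meet a (c a) = join (meet (meet a (c a)) b) (meet (meet a (c a)) (c b)).

(* Main.v *)
Require Import Defs.
From Stdlib Require Import Setoid.

Section Lat.
Context {L : bounded_lattice}.
Implicit Types x y z : L.

Lemma meet_id x : meet x x = x.
Proof. rewrite <- (join_absorb L x x) at 2. apply meet_absorb. Qed.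

Lemma join_id x : join x x = x.
Proof. rewrite <- (meet_absorb L x x) at 2. apply join_absorb. Qed.

Lemma le_refl x : lat_le x x.
Proof. apply meet_id. Qed.

Lemma le_join x y : lat_le x y -> join x y = y.
Proof. unfold lat_le; intro H. rewrite <- H, joinC, meetC. apply join_absorb. Qed.

Lemma join_le x y : join x y = y -> lat_le x y.
Proof. unfold lat_le; intro H. rewrite <- H. apply meet_absorb. Qed.

Lemma le_trans x y z : lat_le x y -> lat_le y z -> lat_le x z.
Proof. unfold lat_le; intros H1 H2. rewrite <- H1, <- meetA, H2. reflexivity. Qed.

Lemma le_antisym x y : lat_le x y -> lat_le y x -> x = y.
Proof. unfold lat_le; intros H1 H2. rewrite <- H1, meetC. exact H2. Qed.

Lemma glb x y z : lat_le z x -> lat_le z y -> lat_le z (meet x y).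
Proof. unfold lat_le; intros H1 H2. rewrite meetA, H1, H2. reflexivity. Qed.

Lemma lub x y z : lat_le x z -> lat_le y z -> lat_le (join x y) z.
Proof. intros H1 H2. apply join_le. rewrite <- joinA, (le_join _ _ H2), (le_join _ _ H1). reflexivity. Qed.

Lemma meet_l x y : lat_le (meet x y) x.
Proof. unfold lat_le. rewrite meetC, meetA, meet_id. reflexivity. Qed.

Lemma meet_r x y : lat_le (meet x y) y.
Proof. rewrite meetC. apply meet_l. Qed.

Lemma join_l x y : lat_le x (join x y).
Proof. apply meet_absorb. Qed.

Lemma join_r x y : lat_le y (join x y).
Proof. rewrite joinC. apply join_l. Qed.

Lemma mtl x y z : lat_le x z -> lat_le (meet x y) z.
Proof. intro H. exact (le_trans _ _ _ (meet_l x y) H). Qed.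
Lemma mtr x y z : lat_le y z -> lat_le (meet x y) z.
Proof. intro H. exact (le_trans _ _ _ (meet_r x y) H). Qed.
Lemma jtl x y z : lat_le z x -> lat_le z (join x y).
Proof. intro H. exact (le_trans _ _ _ H (join_l x y)). Qed.
Lemma jtr x y z : lat_le z y -> lat_le z (join x y).
Proof. intro H. exact (le_trans _ _ _ H (join_r x y)). Qed.

Lemma eq_le x y : x = y -> lat_le x y.
Proof. intros ->. apply le_refl. Qed.

End Lat.

#[global] Hint Resolve le_refl glb lub mtl mtr jtl jtr : lat.

Ltac lat := solve [repeat match goal with v := _ |- _ => subst v end; auto 8 with lat].

Section PK.
Context {L : bounded_lattice} (c : L -> L) (HPK : pseudo_kleene L c) (Hmod : modular L).
Implicit Types x y z a b p X Y : L.

Lemma anti x y : lat_le x y -> lat_le (c y) (c x).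
Proof. apply (pk_antitone _ _ HPK). Qed.
Lemma invol x : c (c x) = x.
Proof. apply (pk_invol _ _ HPK). Qed.

Lemma dm_meet x y : c (meet x y) = join (c x) (c y).
Proof.
  apply le_antisym.
  - rewrite <- (invol (join (c x) (c y))). apply anti.
    apply glb.
    + rewrite <- (invol x) at 2. apply anti. apply join_l.
    + rewrite <- (invol y) at 2. apply anti. apply join_r.
  - apply lub; apply anti; lat.
Qed.

Lemma dm_join x y : c (join x y) = meet (c x) (c y).
Proof.
  rewrite <- (invol x) at 1. rewrite <- (invol y) at 1.
  rewrite <- dm_meet. apply invol.
Qed.

Lemma cancel X Y z : lat_le X Y -> meet X z = meet Y z -> join X z = join Y z -> X = Y.
Proof.
  intros H1 H2 H3.
  assert (E : join X (meet z Y) = meet (join X z) Y) by (apply Hmod; exact H1).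
  assert (E2 : meet (join Y z) Y = Y) by (rewrite meetC; apply meet_absorb).
  rewrite H3, E2, (meetC _ z Y), <- H2, join_absorb in E. exact E.
Qed.

Definition M (b x : L) := meet x (join b (c b)) = join (meet x b) (meet x (c b)).

Lemma F b x : M b x ->
  join x (meet b (c b)) = meet (join x b) (join x (c b)).
Proof.
  intro HM. unfold M in HM.
  set (q := join b (c b)) in *. set (e := meet b (c b)).
  assert (eq : lat_le e q) by (unfold e, q; lat).
  assert (HXY : lat_le (join x e) (meet (join x b) (join x (c b)))) by (unfold e; lat).
  apply cancel with q; auto.
  - apply le_antisym.
    + apply glb; [apply mtl; exact HXY | lat].
    + assert (A1 : lat_le (meet (join x b) q) (join b (meet x (c b)))).
      { assert (E : join b (meet x q) = meet (join b x) q) by (apply Hmod; unfold q; lat).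
        rewrite joinC, <- E, HM. lat. }
      assert (A2 : lat_le (meet (join x (c b)) q) (join (c b) (meet x b))).
      { assert (E : join (c b) (meet x q) = meet (join (c b) x) q) by (apply Hmod; unfold q; lat).
        rewrite (joinC _ x), <- E, HM. lat. }
      apply le_trans with (meet (join b (meet x (c b))) (join (c b) (meet x b))).
      { apply glb; [apply le_trans with (meet (join x b) q); [lat|exact A1]
                   |apply le_trans with (meet (join x (c b)) q); [lat|exact A2]]. }
      assert (E1 : join (meet x b) (meet (c b) (join b (meet x (c b))))
                   = meet (join (meet x b) (c b)) (join b (meet x (c b)))) by (apply Hmod; lat).
      assert (E2 : join (meet x (c b)) (meet b (c b)) = meet (join (meet x (c b)) b) (c b))
        by (apply Hmod; lat).
      apply le_trans with (join (meet x b) (meet (c b) (join b (meet x (c b))))).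
      { rewrite E1. apply glb; lat. }
      apply lub.
      * apply glb; lat.
      * rewrite meetC, joinC, <- E2. fold e. apply glb; lat.
  - apply le_antisym.
    + apply lub; [ apply le_trans with (join x b); lat | lat].
    + apply lub; [ apply le_trans with (meet (join x b) (join x (c b))); lat | lat].
Qed.

Lemma L2 b x : M b x -> M b (c x).
Proof.
  intro HM. pose proof (F b x HM) as HF.
  apply (f_equal c) in HF.
  rewrite dm_join, dm_meet, dm_meet, !dm_join, invol in HF.
  unfold M. rewrite (joinC _ b (c b)), HF. apply joinC.
Qed.

Lemma P b p : p = meet (join p b) (join p (c b)) -> M b p.
Proof.
  intro H. unfold M. set (q := join b (c b)).
  symmetry. apply cancel with b.
  - unfold q; lat.
  - apply le_antisym.
    + apply glb; [ | lat]. apply mtl. unfold q; lat.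
    + apply glb; lat.
  - apply le_antisym.
    + lat.
    + apply le_trans with (meet q (join b p)); [unfold q; lat|].
      assert (E : join b (meet (c b) (join b p)) = meet (join b (c b)) (join b p))
        by (apply Hmod; lat).
      fold q in E. rewrite <- E.
      apply lub; [lat|].
      apply le_trans with (meet p (c b)); [|lat].
      apply glb; [|lat].
      rewrite H at 2. apply glb; [apply mtr; rewrite joinC; lat | lat].
Qed.

Lemma C3_M a b : (meet a (c a) = join (meet (meet a (c a)) b) (meet (meet a (c a)) (c b)))
  <-> M b (meet a (c a)).
Proof.
  unfold M. rewrite (pk_kleene _ _ HPK a b). tauto.
Qed.

Lemma P_from_C3 a b :
  meet a (c a) = join (meet (meet a (c a)) b) (meet (meet a (c a)) (c b)) ->
  M b (join a (c a)).
Proof.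
  intro H. apply P. apply (f_equal c) in H.
  rewrite dm_join, !dm_meet, !invol in H. rewrite (joinC _ (c a) a) in H. rewrite (meetC _ (join (join a (c a)) b)). exact H.
Qed.

Lemma K a b : commutes c a b ->
  meet b (c b) = join (meet (meet b (c b)) a) (meet (meet b (c b)) (c a)).
Proof.
  intros [H1 [H2 H3]].
  apply C3_M.
  assert (Hb' : M a (c b)) by (apply L2; exact H2).
  assert (HP : M b (join a (c a))) by (apply P_from_C3; exact H3).
  assert (HQ : M a (join b (c b))).
  { unfold M in *. apply le_antisym; [|lat].
    rewrite meetC, HP. apply lub.
    - rewrite meetC, H2. lat.
    - rewrite meetC, Hb'. lat. }
  apply L2 in HQ. rewrite dm_join, invol, meetC in HQ. exact HQ.
Qed.

End PK.

Theorem lemma4p13 (L : bounded_lattice) (c : L -> L)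
  (HPK : pseudo_kleene L c) (Hmod : modular L) (x y : L) :
  (commutes c x y <-> commutes c y x) /\
  (commutes c x y <-> commutes c x (c y)) /\
  (commutes c x y <-> commutes c (c x) y) /\
  (commutes c x y <->
     (commutes c x y /\
      meet (join x (c x)) (join y (c y)) =
      join (meet (join x (c x)) y) (meet (join x (c x)) (c y)))).
Proof.
  pose proof (invol c HPK) as Hi.
  split; [|split; [|split]].
  - split; intro H; pose proof (K c HPK Hmod _ _ H) as HK; destruct H as [H1 [H2 H3]];
      unfold commutes; auto.
  - unfold commutes. split.
    + intros [H1 [H2 H3]]. rewrite !Hi. split; [|split].
      * rewrite (joinC _ (c y) y), H1. apply joinC.
      * apply (L2 c HPK Hmod x y H2).
      * rewrite (joinC _ (meet (meet x (c x)) _)). exact H3.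
    + rewrite !Hi. intros [H1 [H2 H3]]. split; [|split].
      * rewrite (joinC _ y (c y)), H1. apply joinC.
      * pose proof (L2 c HPK Hmod x (c y) H2) as HH. unfold M in HH. rewrite Hi in HH. exact HH.
      * rewrite (joinC _ (meet (meet x (c x)) _)). exact H3.
  - unfold commutes. split.
    + intros [H1 [H2 H3]]. rewrite !Hi. split; [|split].
      * apply (L2 c HPK Hmod y x H1).
      * rewrite (joinC _ (c x) x), H2. apply joinC.
      * rewrite (meetC _ (c x) x). exact H3.
    + rewrite !Hi. intros [H1 [H2 H3]]. split; [|split].
      * pose proof (L2 c HPK Hmod y (c x) H1) as HH. unfold M in HH. rewrite Hi in HH. exact HH.
      * rewrite (joinC _ x (c x)), H2. apply joinC.
      * rewrite (meetC _ x (c x)). exact H3.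
  - split; [|tauto]. intro H. split; [exact H|].
    destruct H as [H1 [H2 H3]].
    exact (P_from_C3 c HPK Hmod x y H3).
Qed.
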